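(* The pair $m=(\mathfrak L,\mathfrak R)$, where $\mathfrak L\colon\mathcal L_G\to\mathcal L_S$, $\mathfrak L(\overleftarrow e)=Se$, $\mathfrak L(r(e,u,f))=\rho(e,u,f)$, and $\mathfrak R\colon\mathcal R_G\to\mathcal R_S$, $\mathfrak R(\overrightarrow e)=eS$, $\mathfrak R(l(e,u,f))=\lambda(e,u,f)$, is an isomorphism of cross-connections from $(\mathcal R_G,\mathcal L_G;\Gamma_G)$ to $(\mathcal R_S,\mathcal L_S;\Gamma_S)$: $\mathfrak L$ and $\mathfrak R$ are isomorphisms of normal categories, and (M1) for every $(\overleftarrow e,\overrightarrow e)\in E_{\Gamma_G}$ one has $(\mathfrak L(\overleftarrow e),\mathfrak R(\overrightarrow e))=(Se,eS)\in E_{\Gamma_S}$ and $\mathfrak L(r^e(\overleftarrow g))=\rho^e(\mathfrak L(\overleftarrow g))$ for all $g\in E$; (M2) for $(\overleftarrow e,\overrightarrow e),(\overleftarrow f,\overrightarrow f)\in E_{\Gamma_G}$ and $u\in eSf$, $\mathfrak R$ maps the transpose of $r(e,u,f)$ to the transpose of $\mathfrak L(r(e,u,f))$.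
   Context: Let $S$ be a regular semigroup, $E=E(S)$. $\mathcal L_G$: objects $E/\mathscr L$ (classes $\overleftarrow e$); morphisms $\overleftarrow e\to\overleftarrow f$ the classes $r(e,u,f)$, $u\in eSf$, under $(e,u,f)\sim(g,v,h)$ iff $e\mathscr L g$, $f\mathscr L h$, $u=ev$; composition $r(e,u,f)r(f,v,g)=r(e,uv,g)$. $\mathcal R_G$: objects $E/\mathscr R$ (classes $\overrightarrow e$); morphisms $\overrightarrow e\to\overrightarrow f$ the classes $l(e,u,f)$, $u\in fSe$, under $(e,u,f)\sim(g,v,h)$ iff $e\mathscr R g$, $f\mathscr R h$, $u=ve$; composition $l(e,u,f)l(f,v,g)=l(e,vu,g)$. $\mathcal L_S$: objects $Se$, $e\in E$; morphisms $\rho(e,u,f)\colon Se\to Sf$, $t\mapsto tu$, $u\in eSf$. $\mathcal R_S$: objects $eS$; morphisms $\lambda(e,w,f)\colon eS\to fS$, $t\mapsto wt$, $w\in fSe$. Composition is left to right. $\Gamma_G\colon\mathcal R_G\to N^*\mathcal L_G$ is the cross-connection $\overrightarrow e\mapsto H(r^e;-)$, where $r^e(\overleftarrow g)=r(g,ge,e)$, and $\Gamma_S\colon\mathcal R_S\to N^*\mathcal L_S$ is Nambooripad's cross-connection $eS\mapsto H(\rho^e;-)$ of $S$, where $\rho^e(Sg)=\rho(g,ge,e)$. Their biordered sets are $E_{\Gamma_G}=\{(\overleftarrow e,\overrightarrow e):e\in E\}$ and $E_{\Gamma_S}=\{(Se,eS):e\in E\}$, with associated idempotent cones $\gamma(\overleftarrow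 e,\overrightarrow e)=r^e$ and $\gamma(Se,eS)=\rho^e$. Transposes: for $(\overleftarrow e,\overrightarrow e),(\overleftarrow f,\overrightarrow f)\in E_{\Gamma_G}$ the transpose of $r(e,u,f)$ is $l(f,u,e)\colon\overrightarrow f\to\overrightarrow e$, and for $(Se,eS),(Sf,fS)\in E_{\Gamma_S}$ the transpose of $\rho(e,u,f)$ is $\lambda(f,u,e)\colon fS\to eS$. A morphism of cross-connections $(\mathcal D,\mathcal C;\Gamma)\to(\mathcal D',\mathcal C';\Gamma')$ is a pair $(F,G)$ of inclusion-preserving functors $F\colon\mathcal C\to\mathcal C'$, $G\colon\mathcal D\to\mathcal D'$ with (M1) $(c,d)\in E_\Gamma\Rightarrow(F(c),G(d))\in E_{\Gamma'}$ and $F(\gamma(c,d)(c'))=\gamma(F(c),G(d))(F(c'))$ for all objects $c'$ of $\mathcal C$; (M2) if $(c,d),(c',d')\in E_\Gamma$ and $f^*\colon d'\to d$ is the transpose of $f\colon c\to c'$ then $G(f^* )=(F(f))^*$. An isomorphism of cross-connections is such a morphism whose components are isomorphisms of normal categories (inclusion-preserving isomorphisms of categories with inclusion-preserving inverses). *)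

(* Defs.v *)
Set Implicit Arguments.
Unset Strict Implicit.

Record Semigroup := {
  car :> Type;
  smul : car -> car -> car;
  smulA : forall a b c, smul (smul a b) c = smul a (smul b c)
}.

Arguments smul {s} _ _.

Definition regular (S : Semigroup) : Prop :=
  forall a : S, exists x : S, smul (smul a x) a = a.

Record Idem (S : Semigroup) := mkIdem { ival :> car S; idem : smul ival ival = ival }.
Arguments mkIdem {S} _ _.

Section Constructions.
Variable S : Semigroup.

(* Green's relations via principal one-sided ideals S^1 a, a S^1. *)
Definition inS1a (a x : S) : Prop := x = a \/ exists s : S, x = smul s a.
Definition inaS1 (a x : S) : Prop := x = a \/ exists s : S, x = smul a s.
Definition greenL (a b : S) : Prop := forall x, inS1a a x <-> inS1a b x.
Definition greenR (a b : S) : Prop := forall x, inaS1 a x <-> inaS1 b x.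

Definition inSe (e x : S) : Prop := exists s : S, x = smul s e.
Definition ineS (e x : S) : Prop := exists s : S, x = smul e s.

Definition in_eSf (e u f : S) : Prop := exists s : S, u = smul (smul e s) f.

Lemma in_eSf_comp (e f f' g : S) (u v : S) :
  in_eSf e u f -> in_eSf f' v g -> in_eSf e (smul u v) g.
Proof.
  intros [s Hs] [t Ht]. exists (smul (smul s f) (smul f' t)).
  subst u v. rewrite !smulA. reflexivity.
Qed.

Lemma in_eSf_id (e : Idem S) : in_eSf e e e.
Proof. exists (ival e). rewrite !idem. reflexivity. Qed.

Lemma in_eSf_cone (e g : Idem S) : in_eSf g (smul g e) e.
Proof. exists (ival g). rewrite idem. reflexivity. Qed.

End Constructions.

(* Categories presented by setoids of objects and morphisms, with a    *)
(* distinguished class of inclusions. Composition is left to right:    *)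
(* comp f g means "first f, then g".                                   *)

Record SCat := {
  Ob : Type;
  Mor : Type;
  ob_eq : Ob -> Ob -> Prop;
  mor_eq : Mor -> Mor -> Prop;
  dom : Mor -> Ob;
  cod : Mor -> Ob;
  comp : Mor -> Mor -> Mor;
  idm : Ob -> Mor;
  is_incl : Mor -> Prop
}.

Arguments ob_eq {s} _ _.
Arguments mor_eq {s} _ _.
Arguments dom {s} _.
Arguments cod {s} _.
Arguments comp {s} _ _.
Arguments idm {s} _.
Arguments is_incl {s} _.

Definition is_functor (C D : SCat) (Fo : Ob C -> Ob D) (Fm : Mor C -> Mor D) : Prop :=
  (forall a b, ob_eq a b -> ob_eq (Fo a) (Fo b)) /\
  (forall m n, mor_eq m n -> mor_eq (Fm m) (Fm n)) /\
  (forall m, ob_eq (dom (Fm m)) (Fo (dom m)) /\ ob_eq (cod (Fm m)) (Fo (cod m))) /\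
  (forall m n, ob_eq (cod m) (dom n) -> mor_eq (Fm (comp m n)) (comp (Fm m) (Fm n))) /\
  (forall a, mor_eq (Fm (idm a)) (idm (Fo a))).

Definition inclusion_preserving (C D : SCat) (Fm : Mor C -> Mor D) : Prop :=
  forall m, is_incl m -> is_incl (Fm m).

Definition normal_cat_iso (C D : SCat) (Fo : Ob C -> Ob D) (Fm : Mor C -> Mor D) : Prop :=
  is_functor Fo Fm /\ inclusion_preserving Fm /\
  exists (Go : Ob D -> Ob C) (Gm : Mor D -> Mor C),
    is_functor Go Gm /\ inclusion_preserving Gm /\
    (forall a, ob_eq (Go (Fo a)) a) /\ (forall b, ob_eq (Fo (Go b)) b) /\
    (forall m, mor_eq (Gm (Fm m)) m) /\ (forall n, mor_eq (Fm (Gm n)) n).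

(* Objects are represented by idempotents e (standing for the class    *)
(* <-e, ->e, or the set S e, e S respectively).                        *)

Section Cats.
Variable S : Semigroup.

Inductive LGMor := rmor (e : Idem S) (u : S) (f : Idem S) (H : in_eSf e u f).
Inductive RGMor := lmor (e : Idem S) (u : S) (f : Idem S) (H : in_eSf f u e).
(* rho(e,u,f) : S e -> S f, t |-> t u, u in e S f *)
Inductive LSMor := rho (e : Idem S) (u : S) (f : Idem S) (H : in_eSf e u f).
(* lambda(e,w,f) : e S -> f S, t |-> w t, w in f S e *)
Inductive RSMor := lam (e : Idem S) (w : S) (f : Idem S) (H : in_eSf f w e).
Arguments rmor : clear implicits.
Arguments lmor : clear implicits.
Arguments rho : clear implicits.
Arguments lam : clear implicits.

Definition LG_eq (m n : LGMor) : Prop :=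
  let (e, u, f, _) := m in let (g, v, h, _) := n in
  greenL e g /\ greenL f h /\ u = smul (ival e) v.
Definition RG_eq (m n : RGMor) : Prop :=
  let (e, u, f, _) := m in let (g, v, h, _) := n in
  greenR e g /\ greenR f h /\ u = smul v (ival e).

Definition LS_obeq (e g : Idem S) : Prop := forall x, inSe e x <-> inSe g x.
Definition RS_obeq (e g : Idem S) : Prop := forall x, ineS e x <-> ineS g x.

Definition LS_eq (m n : LSMor) : Prop :=
  let (e, u, f, _) := m in let (g, v, h, _) := n in
  LS_obeq e g /\ LS_obeq f h /\ (forall t, inSe e t -> smul t u = smul t v).
Definition RS_eq (m n : RSMor) : Prop :=
  let (e, w, f, _) := m in let (g, v, h, _) := n in
  RS_obeq e g /\ RS_obeq f h /\ (forall t, ineS e t -> smul w t = smul v t).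

Definition LG_comp (m n : LGMor) : LGMor :=
  let (e, u, f, H) := m in let (f', v, g, H') := n in
  rmor e (smul u v) g (in_eSf_comp H H').
Definition RG_comp (m n : RGMor) : RGMor :=
  let (e, u, f, H) := m in let (f', v, g, H') := n in
  lmor e (smul v u) g (in_eSf_comp H' H).
Definition LS_comp (m n : LSMor) : LSMor :=
  let (e, u, f, H) := m in let (f', v, g, H') := n in
  rho e (smul u v) g (in_eSf_comp H H').
Definition RS_comp (m n : RSMor) : RSMor :=
  let (e, w, f, H) := m in let (f', v, g, H') := n in
  lam e (smul v w) g (in_eSf_comp H' H).

(* Inclusions.  In L_G: the morphisms r(e,e,f) with e = e f (i.e. S e ⊆ S f);
   in R_G: l(e,e,f) with e = f e (i.e. e S ⊆ f S); in L_S and R_S: the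
   set-theoretic inclusion maps S e ⊆ S f, e S ⊆ f S. *)
Definition LG_incl (m : LGMor) : Prop :=
  exists m', LG_eq m m' /\
    (let (e, u, f, _) := m' in u = ival e /\ ival e = smul (ival e) (ival f)).
Definition RG_incl (m : RGMor) : Prop :=
  exists m', RG_eq m m' /\
    (let (e, u, f, _) := m' in u = ival e /\ ival e = smul (ival f) (ival e)).
Definition LS_incl (m : LSMor) : Prop :=
  let (e, u, f, _) := m in
  (forall x, inSe e x -> inSe f x) /\ (forall t, inSe e t -> smul t u = t).
Definition RS_incl (m : RSMor) : Prop :=
  let (e, w, f, _) := m in
  (forall x, ineS e x -> ineS f x) /\ (forall t, ineS e t -> smul w t = t).

Definition LG : SCat := {|
  Ob := Idem S; Mor := LGMor; ob_eq := fun e g => greenL e g; mor_eq := LG_eq;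
  dom := fun m => let (e, _, _, _) := m in e;
  cod := fun m => let (_, _, f, _) := m in f;
  comp := LG_comp; idm := fun e => rmor e e e (in_eSf_id e); is_incl := LG_incl |}.

Definition RG : SCat := {|
  Ob := Idem S; Mor := RGMor; ob_eq := fun e g => greenR e g; mor_eq := RG_eq;
  dom := fun m => let (e, _, _, _) := m in e;
  cod := fun m => let (_, _, f, _) := m in f;
  comp := RG_comp; idm := fun e => lmor e e e (in_eSf_id e); is_incl := RG_incl |}.

Definition LS : SCat := {|
  Ob := Idem S; Mor := LSMor; ob_eq := LS_obeq; mor_eq := LS_eq;
  dom := fun m => let (e, _, _, _) := m in e;
  cod := fun m => let (_, _, f, _) := m in f;
  comp := LS_comp; idm := fun e => rho e e e (in_eSf_id e); is_incl := LS_incl |}.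

Definition RS : SCat := {|
  Ob := Idem S; Mor := RSMor; ob_eq := RS_obeq; mor_eq := RS_eq;
  dom := fun m => let (e, _, _, _) := m in e;
  cod := fun m => let (_, _, f, _) := m in f;
  comp := RS_comp; idm := fun e => lam e e e (in_eSf_id e); is_incl := RS_incl |}.

Definition fL_ob (e : Ob LG) : Ob LS := e.
Definition fL_mor (m : Mor LG) : Mor LS :=
  let (e, u, f, H) := m in rho e u f H.
Definition fR_ob (e : Ob RG) : Ob RS := e.
Definition fR_mor (m : Mor RG) : Mor RS :=
  let (e, u, f, H) := m in lam e u f H.

Definition E_GammaG (a : Ob LG) (b : Ob RG) : Prop :=
  exists e : Idem S, @ob_eq LG a e /\ @ob_eq RG b e.
Definition E_GammaS (a : Ob LS) (b : Ob RS) : Prop :=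
  exists e : Idem S, @ob_eq LS a e /\ @ob_eq RS b e.

Definition r_cone (e : Idem S) (g : Ob LG) : Mor LG := rmor g (smul g e) e (in_eSf_cone e g).
Definition rho_cone (e : Idem S) (g : Ob LS) : Mor LS := rho g (smul g e) e (in_eSf_cone e g).

(* Transposes, relative to the idempotents (e, f) carried by the morphism:
   r(e,u,f)^* = l(f,u,e), rho(e,u,f)^* = lambda(f,u,e). *)
Definition transposeG (m : Mor LG) : Mor RG := let (e, u, f, H) := m in lmor f u e H.
Definition transposeS (m : Mor LS) : Mor RS := let (e, u, f, H) := m in lam f u e H.

End Cats.
Arguments rmor {S} e u f H.
Arguments lmor {S} e u f H.
Arguments rho {S} e u f H.
Arguments lam {S} e w f H.

(* Main.v *)
Require Import Defs.
From Stdlib Require Import Setoid.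

Section H.
Variable S : Semigroup.

Lemma inSe_self (e : Idem S) : inSe e e.
Proof. exists (ival e). now rewrite idem. Qed.
Lemma ineS_self (e : Idem S) : ineS e e.
Proof. exists (ival e). now rewrite idem. Qed.
Lemma inSe_fix (e : Idem S) t : inSe e t -> smul t e = t.
Proof. intros [s ->]. now rewrite smulA, idem. Qed.
Lemma ineS_fix (e : Idem S) t : ineS e t -> smul e t = t.
Proof. intros [s ->]. now rewrite <- smulA, idem. Qed.
Lemma eSf_l (e f : Idem S) u : in_eSf e u f -> smul e u = u.
Proof. intros [s ->]. rewrite <- !smulA, idem. reflexivity. Qed.
Lemma eSf_r (e f : Idem S) u : in_eSf e u f -> smul u f = u.
Proof. intros [s ->]. rewrite !smulA, idem. reflexivity. Qed.

Lemma gL_LS (e g : Idem S) : greenL e g <-> LS_obeq e g.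
Proof.
  split.
  - intros H x; split; intros Hx.
    + destruct (proj1 (H x) (or_intror (let (s, E) := Hx in ex_intro _ s E)))
        as [->|[s ->]]; [apply inSe_self| now exists s].
    + destruct (proj2 (H x) (or_intror (let (s, E) := Hx in ex_intro _ s E)))
        as [->|[s ->]]; [apply inSe_self| now exists s].
  - intros H x; split; intros Hx.
    + assert (inSe e x) as Hx' by (destruct Hx as [->|[s ->]]; [apply inSe_self| now exists s]).
      destruct (proj1 (H x) Hx') as [s ->]. right. now exists s.
    + assert (inSe g x) as Hx' by (destruct Hx as [->|[s ->]]; [apply inSe_self| now exists s]).
      destruct (proj2 (H x) Hx') as [s ->]. right. now exists s.
Qed.

Lemma gR_RS (e g : Idem S) : greenR e g <-> RS_obeq e g.
Proof.
  split.
  - intros H x; split; intros Hx.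
    + destruct (proj1 (H x) (or_intror (let (s, E) := Hx in ex_intro _ s E)))
        as [->|[s ->]]; [apply ineS_self| now exists s].
    + destruct (proj2 (H x) (or_intror (let (s, E) := Hx in ex_intro _ s E)))
        as [->|[s ->]]; [apply ineS_self| now exists s].
  - intros H x; split; intros Hx.
    + assert (ineS e x) as Hx' by (destruct Hx as [->|[s ->]]; [apply ineS_self| now exists s]).
      destruct (proj1 (H x) Hx') as [s ->]. right. now exists s.
    + assert (ineS g x) as Hx' by (destruct Hx as [->|[s ->]]; [apply ineS_self| now exists s]).
      destruct (proj2 (H x) Hx') as [s ->]. right. now exists s.
Qed.

Lemma LSo_refl (e : Idem S) : LS_obeq e e. Proof. intro; tauto. Qed.
Lemma RSo_refl (e : Idem S) : RS_obeq e e. Proof. intro; tauto. Qed.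
Lemma gL_refl (e : Idem S) : greenL e e. Proof. intro; tauto. Qed.
Lemma gR_refl (e : Idem S) : greenR e e. Proof. intro; tauto. Qed.
Lemma LS_refl (m : LSMor S) : LS_eq m m.
Proof. destruct m; simpl; auto using LSo_refl. Qed.
Lemma RS_refl (m : RSMor S) : RS_eq m m.
Proof. destruct m; simpl; auto using RSo_refl. Qed.
Lemma LG_refl (m : LGMor S) : LG_eq m m.
Proof. destruct m as [e u f H]; simpl; repeat split; auto using gL_refl. now rewrite (eSf_l _ _ _ H). Qed.
Lemma RG_refl (m : RGMor S) : RG_eq m m.
Proof. destruct m as [e u f H]; simpl; repeat split; auto using gR_refl. now rewrite (eSf_r _ _ _ H). Qed.

Definition gL_mor (m : LSMor S) : LGMor S := let (e, u, f, H) := m in rmor e u f H.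
Definition gR_mor (m : RSMor S) : RGMor S := let (e, u, f, H) := m in lmor e u f H.

Lemma fL_iso : normal_cat_iso (@fL_ob S) (@fL_mor S).
Proof.
  split; [|split].
  - refine (conj _ (conj _ (conj _ (conj _ _)))).
    + intros a0 b0 Hab. now apply gL_LS.
    + intros [e u f H] [g v h H'] [E1 [E2 E3]]; simpl.
      split; [apply gL_LS; assumption|split; [apply gL_LS; assumption|]].
      intros t Ht. subst u. rewrite <- smulA, (inSe_fix _ _ Ht). reflexivity.
    + intros [e u f H]; split; apply LSo_refl.
    + intros [e u f H] [g v h H'] _; apply LS_refl.
    + intros a0; apply LS_refl.
  - intros [e u f H] [[e' u' f' H'] [[E1 [E2 E3]] [E4 E5]]]; simpl in *.
    subst u u'. apply (proj1 (gL_LS _ _)) in E1. apply (proj1 (gL_LS _ _)) in E2. split.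
    + intros x Hx. apply E2. destruct Hx as [s ->].
      destruct (proj1 (E1 e) (inSe_self e)) as [a Ha].
      exists (smul (smul s a) e'). rewrite Ha at 1. rewrite E5 at 1.
      now rewrite !smulA.
    + intros t Ht. destruct (proj1 (E1 e) (inSe_self e)) as [a Ha].
      assert (smul (ival e) (ival e') = e) as He by (rewrite Ha, smulA, idem; auto).
      rewrite He. now apply inSe_fix.
  - exists (fun e => e), gL_mor. split; [|split].
    + refine (conj _ (conj _ (conj _ (conj _ _)))).
      * intros a0 b0 Hab. now apply gL_LS.
      * intros [e u f H] [g v h H'] [E1 [E2 E3]]; simpl.
        split; [apply gL_LS; assumption|split; [apply gL_LS; assumption|]].
        rewrite <- (eSf_l _ _ _ H). apply E3. apply inSe_self.
      * intros [e u f H]; split; apply gL_refl.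
      * intros [e u f H] [g v h H'] _; apply LG_refl.
      * intros a0; apply LG_refl.
    + intros [e u f H] [E1 E2]; simpl.
      assert (Hef : ival e = smul (ival e) (ival f)).
      { destruct (E1 e (inSe_self e)) as [s Hs]. rewrite Hs at 2. rewrite smulA, idem. exact Hs. }
      assert (Hin : in_eSf e e f) by (exists (ival e); now rewrite idem).
      exists (rmor e e f Hin). simpl. repeat split; auto using gL_refl.
      rewrite idem. rewrite <- (E2 e (inSe_self e)). symmetry. apply (eSf_l _ _ _ H).
    + refine (conj _ (conj _ (conj _ _))); intros; try apply gL_refl; try apply LSo_refl.
      * destruct m; apply LG_refl.
      * destruct n; apply LS_refl.
Qed.

Lemma fR_iso : normal_cat_iso (@fR_ob S) (@fR_mor S).
Proof.
  split; [|split].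
  - refine (conj _ (conj _ (conj _ (conj _ _)))).
    + intros a0 b0 Hab. now apply gR_RS.
    + intros [e u f H] [g v h H'] [E1 [E2 E3]]; simpl.
      split; [apply gR_RS; assumption|split; [apply gR_RS; assumption|]].
      intros t Ht. subst u. rewrite smulA, (ineS_fix _ _ Ht). reflexivity.
    + intros [e u f H]; split; apply RSo_refl.
    + intros [e u f H] [g v h H'] _; apply RS_refl.
    + intros a0; apply RS_refl.
  - intros [e u f H] [[e' u' f' H'] [[E1 [E2 E3]] [E4 E5]]]; simpl in *.
    subst u u'. apply (proj1 (gR_RS _ _)) in E1. apply (proj1 (gR_RS _ _)) in E2. split.
    + intros x Hx. apply E2. destruct Hx as [s ->].
      destruct (proj1 (E1 e) (ineS_self e)) as [a Ha].
      exists (smul e' (smul a s)). rewrite Ha at 1. rewrite E5 at 1.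
      now rewrite !smulA.
    + intros t Ht. destruct (proj1 (E1 e) (ineS_self e)) as [a Ha].
      assert (smul (ival e') (ival e) = e) as He by (rewrite Ha, <- smulA, idem; auto).
      rewrite He. now apply ineS_fix.
  - exists (fun e => e), gR_mor. split; [|split].
    + refine (conj _ (conj _ (conj _ (conj _ _)))).
      * intros a0 b0 Hab. now apply gR_RS.
      * intros [e u f H] [g v h H'] [E1 [E2 E3]]; simpl.
        split; [apply gR_RS; assumption|split; [apply gR_RS; assumption|]].
        rewrite <- (eSf_r _ _ _ H). apply E3. apply ineS_self.
      * intros [e u f H]; split; apply gR_refl.
      * intros [e u f H] [g v h H'] _; apply RG_refl.
      * intros a0; apply RG_refl.
    + intros [e u f H] [E1 E2]; simpl.
      assert (Hef : ival e = smul (ival f) (ival e)).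
      { destruct (E1 e (ineS_self e)) as [s Hs]. rewrite Hs at 2. rewrite <- smulA, idem. exact Hs. }
      assert (Hin : in_eSf f e e) by (exists (ival e); now rewrite smulA, idem, <- Hef).
      exists (lmor e e f Hin). simpl. repeat split; auto using gR_refl.
      rewrite idem. rewrite <- (E2 e (ineS_self e)). symmetry. apply (eSf_r _ _ _ H).
    + refine (conj _ (conj _ (conj _ _))); intros; try apply gR_refl; try apply RSo_refl.
      * destruct m; apply RG_refl.
      * destruct n; apply RS_refl.
Qed.

End H.

Theorem mainTheorem19 (S : Semigroup) (Hreg : regular S) :
  normal_cat_iso (@fL_ob S) (@fL_mor S) /\
  normal_cat_iso (@fR_ob S) (@fR_mor S) /\
  (forall e : Idem S,
     E_GammaG (S := S) e e ->
     E_GammaS (fL_ob e) (fR_ob e) /\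
     (forall g : Idem S, @mor_eq (LS S) (fL_mor (r_cone e g)) (rho_cone e (fL_ob g)))) /\
  (forall (e f : Idem S) (u : S) (H : in_eSf e u f),
     E_GammaG (S := S) e e -> E_GammaG (S := S) f f ->
     @mor_eq (RS S) (fR_mor (transposeG (rmor e u f H))) (transposeS (fL_mor (rmor e u f H)))).
Proof.
  split; [apply fL_iso|split; [apply fR_iso|split]].
  - intros e _. split.
    + exists e. split; [apply LSo_refl|apply RSo_refl].
    + intros g. apply LS_refl.
  - intros e f u H _ _. apply RS_refl.
Qed.
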